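(* Let $\kappa_1,\kappa_2,d_1,d_2>0$ be constants (specific heats at constant volume and thermal conductivities of the liquid phase (index $1$) and vapor phase (index $2$)), let $\ell<0$ be a constant (the latent heat), let $j_\Gamma>0$ be a constant (the phase flux), let $r>0$ be a constant (the volume specific heat source), and let $\theta_*\in\mathbf{R}$ (the given interface temperature) and $\theta_{\mathrm{in}}<\theta_*$ (the entrance temperature). Consider the stationary free boundary problem of finding $x_*>0$, $\theta_1\colon[0,x_*]\to\mathbf{R}$ and $\theta_2\colon[x_*,\infty)\to\mathbf{R}$ such that \begin{align*} &\kappa_1 j_\Gamma \theta_1' - d_1\theta_1'' = r \quad\text{in } (0,x_* ),\\ &\kappa_2 j_\Gamma \theta_2' - d_2\theta_2'' = r \quad\text{in } (x_*,\infty),\\ &\theta_1(x_* )=\theta_2(x_* )=\theta_*,\\ &\ell j_\Gamma + d_2\theta_2'(x_* ) - d_1\theta_1'(x_* ) = 0,\\ &\theta_1(0)=\theta_{\mathrm{in}},\qquad \theta_1\le\theta_* \text{ on } [0,x_*], \end{align*} and $\theta_2$ grows at most linearly as $x\to\infty$. Then \[ (-\ell)\le \frac{d_2 r}{\kappa_2 j_\Gamma^2} \] holds if and only if this problem has a unique solution $(\theta_1,\theta_2,x_* )$. Moreover, the location $x_*=x_*(\theta_{\mathrm{in}},j_\Gamma)$ of the interface is strictly decreasing in $\theta_{\mathrm{in}}$ and strictly increasing in $j_\Gamma$, and $x_*\to\infty$ as $j_\Gamma\to\infty$ (with $\theta_{\mathrm{in}}$ fixed) or as $\theta_{\mathrm{in}}\to-\infty$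 (with $j_\Gamma$ fixed).
   Context: This is the one-dimensional stationary two-phase Stefan problem with drift on the half line $(0,\infty)$: the liquid phase occupies $(0,x_* )$, the vapor phase occupies $(x_*,\infty)$, and the point $x_*$ is called the dryout point. The phase flux is $j_\Gamma=\rho_1u_1$ where $\rho_1>0$ is the liquid density and $u_1>0$ the liquid velocity, and $r=\rho_1r_1=\rho_2r_2$ is the (common) volume specific internal heat source. *)

(* Defs.v *)
From Stdlib Require Import Reals.
From Coquelicot Require Import Coquelicot.
Open Scope R_scope.

Definition left_deriv (f : R -> R) (x l : R) : Prop :=
  filterlim (fun y => (f y - f x) / (y - x)) (at_left x) (locally l).
Definition right_deriv (f : R -> R) (x l : R) : Prop :=
  filterlim (fun y => (f y - f x) / (y - x)) (at_right x) (locally l).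

(* (xs, th1, th2) is a (classical) solution of the stationary two-phase
   Stefan problem with drift.  th1 is only meaningful on [0, xs] and th2 on
   [xs, +oo); values outside are irrelevant.  The derivatives at the
   interface are the one-sided ones (left for th1, right for th2). *)
Definition stefan_solution (kappa1 kappa2 d1 d2 l jG r theta_star theta_in : R)
    (xs : R) (th1 th2 : R -> R) : Prop :=
  0 < xs /\
  (forall x, 0 < x < xs ->
     ex_derive th1 x /\ ex_derive (Derive th1) x /\
     kappa1 * jG * Derive th1 x - d1 * Derive (Derive th1) x = r) /\
  (forall x, xs < x ->
     ex_derive th2 x /\ ex_derive (Derive th2) x /\
     kappa2 * jG * Derive th2 x - d2 * Derive (Derive th2) x = r) /\
  th1 xs = theta_star /\ th2 xs = theta_star /\
  (exists p1 p2, left_deriv th1 xs p1 /\ right_deriv th2 xs p2 /\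
     l * jG + d2 * p2 - d1 * p1 = 0) /\
  th1 0 = theta_in /\ filterlim th1 (at_right 0) (locally (th1 0)) /\
  (forall x, 0 <= x <= xs -> th1 x <= theta_star) /\
  (exists C X, forall x, X <= x -> Rabs (th2 x) <= C * (1 + Rabs x)).

Definition stefan_unique (kappa1 kappa2 d1 d2 l jG r theta_star theta_in : R)
    : Prop :=
  exists xs th1 th2,
    stefan_solution kappa1 kappa2 d1 d2 l jG r theta_star theta_in xs th1 th2 /\
    forall xs' th1' th2',
      stefan_solution kappa1 kappa2 d1 d2 l jG r theta_star theta_in xs' th1' th2' ->
      xs' = xs /\ (forall x, 0 <= x <= xs -> th1' x = th1 x) /\
      (forall x, xs <= x -> th2' x = th2 x).

(* Main.v *)
Require Import Defs.
From Stdlib Require Import Reals.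
From Coquelicot Require Import Coquelicot.
From Stdlib Require Import Lra Psatz.
Open Scope R_scope.


Lemma ball_R (x e y : R) : ball x e y <-> Rabs (y - x) < e.
Proof. unfold ball; simpl; unfold AbsRing_ball, abs, minus, plus, opp; simpl. tauto. Qed.

Lemma at_left_eps f x L :
  filterlim f (at_left x) (locally L) <->
  forall eps, 0 < eps -> exists d, 0 < d /\ forall y, x - d < y < x -> Rabs (f y - L) < eps.
Proof.
  split.
  - intros H eps He.
    destruct (H (fun z => ball L eps z)) as [d Hd].
    { exists (mkposreal eps He). auto. }
    exists d. split. apply cond_pos. intros y Hy.
    apply ball_R. apply Hd. apply ball_R. apply Rabs_def1; lra. lra.
  - intros H P [eps HP]. destruct (H eps (cond_pos eps)) as [d [Hd0 Hd]].
    exists (mkposreal d Hd0). intros y Hy Hlt. apply HP. apply ball_R.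
    apply ball_R in Hy. simpl in Hy. apply Hd. apply Rabs_def2 in Hy. simpl in Hy. unfold minus, plus, opp in Hy; simpl in Hy. lra.
Qed.

Lemma at_right_eps f x L :
  filterlim f (at_right x) (locally L) <->
  forall eps, 0 < eps -> exists d, 0 < d /\ forall y, x < y < x + d -> Rabs (f y - L) < eps.
Proof.
  split.
  - intros H eps He.
    destruct (H (fun z => ball L eps z)) as [d Hd].
    { exists (mkposreal eps He). auto. }
    exists d. split. apply cond_pos. intros y Hy.
    apply ball_R. apply Hd. apply ball_R. apply Rabs_def1; lra. lra.
  - intros H P [eps HP]. destruct (H eps (cond_pos eps)) as [d [Hd0 Hd]].
    exists (mkposreal d Hd0). intros y Hy Hlt. apply HP. apply ball_R.
    apply ball_R in Hy. simpl in Hy. apply Hd. apply Rabs_def2 in Hy. simpl in Hy. unfold minus, plus, opp in Hy; simpl in Hy. lra.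
Qed.


Lemma lim_unique_left (f g : R -> R) (x L1 L2 : R) :
  filterlim f (at_left x) (locally L1) -> filterlim g (at_left x) (locally L2) ->
  (exists d, 0 < d /\ forall y, x - d < y < x -> f y = g y) -> L1 = L2.
Proof.
  rewrite !at_left_eps. intros H1 H2 [d [Hd Hfg]].
  destruct (Req_dec L1 L2) as [E|NE]; auto. exfalso.
  assert (He : 0 < Rabs (L1 - L2) / 2).
  { assert (0 < Rabs (L1 - L2)) by (apply Rabs_pos_lt; lra). lra. }
  destruct (H1 _ He) as [d1 [Hd1 K1]]. destruct (H2 _ He) as [d2 [Hd2 K2]].
  set (m := Rmin d (Rmin d1 d2)).
  assert (0 < m) by (unfold m; repeat apply Rmin_pos; auto).
  assert (m <= d /\ m <= d1 /\ m <= d2).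
  { unfold m. split. apply Rmin_l. split. eapply Rle_trans. apply Rmin_r. apply Rmin_l.
    eapply Rle_trans. apply Rmin_r. apply Rmin_r. }
  set (y := x - m / 2).
  assert (A1 := K1 y ltac:(unfold y; lra)). assert (A2 := K2 y ltac:(unfold y; lra)).
  rewrite (Hfg y ltac:(unfold y; lra)) in A1.
  assert (Rabs (L1 - L2) <= Rabs (g y - L1) + Rabs (g y - L2)).
  { replace (L1 - L2) with (-(g y - L1) + (g y - L2)) by ring.
    eapply Rle_trans. apply Rabs_triang. rewrite Rabs_Ropp. lra. }
  lra.
Qed.

Lemma lim_unique_right (f g : R -> R) (x L1 L2 : R) :
  filterlim f (at_right x) (locally L1) -> filterlim g (at_right x) (locally L2) ->
  (exists d, 0 < d /\ forall y, x < y < x + d -> f y = g y) -> L1 = L2.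
Proof.
  rewrite !at_right_eps. intros H1 H2 [d [Hd Hfg]].
  destruct (Req_dec L1 L2) as [E|NE]; auto. exfalso.
  assert (He : 0 < Rabs (L1 - L2) / 2).
  { assert (0 < Rabs (L1 - L2)) by (apply Rabs_pos_lt; lra). lra. }
  destruct (H1 _ He) as [d1 [Hd1 K1]]. destruct (H2 _ He) as [d2 [Hd2 K2]].
  set (m := Rmin d (Rmin d1 d2)).
  assert (0 < m) by (unfold m; repeat apply Rmin_pos; auto).
  assert (m <= d /\ m <= d1 /\ m <= d2).
  { unfold m. split. apply Rmin_l. split. eapply Rle_trans. apply Rmin_r. apply Rmin_l.
    eapply Rle_trans. apply Rmin_r. apply Rmin_r. }
  set (y := x + m / 2).
  assert (A1 := K1 y ltac:(unfold y; lra)). assert (A2 := K2 y ltac:(unfold y; lra)).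
  rewrite (Hfg y ltac:(unfold y; lra)) in A1.
  assert (Rabs (L1 - L2) <= Rabs (g y - L1) + Rabs (g y - L2)).
  { replace (L1 - L2) with (-(g y - L1) + (g y - L2)) by ring.
    eapply Rle_trans. apply Rabs_triang. rewrite Rabs_Ropp. lra. }
  lra.
Qed.

Lemma cont_left (F : R -> R) (x : R) : continuity_pt F x -> filterlim F (at_left x) (locally (F x)).
Proof.
  intros H. apply continuity_pt_filterlim in H.
  intros P HP. destruct (H P HP) as [e He]. exists e. intros y Hy _. apply He. auto.
Qed.

Lemma cont_right (F : R -> R) (x : R) : continuity_pt F x -> filterlim F (at_right x) (locally (F x)).
Proof.
  intros H. apply continuity_pt_filterlim in H.
  intros P HP. destruct (H P HP) as [e He]. exists e. intros y Hy _. apply He. auto.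
Qed.

Lemma deriv_left F x l : derivable_pt_lim F x l -> left_deriv F x l.
Proof.
  intros H. unfold left_deriv. apply at_left_eps. intros eps He.
  destruct (H eps He) as [d Hd]. exists d. split. apply cond_pos.
  intros y Hy. assert (Hh := Hd (y - x) ltac:(lra) ltac:(rewrite Rabs_left; lra)).
  replace (x + (y - x)) with y in Hh by ring. exact Hh.
Qed.

Lemma deriv_right F x l : derivable_pt_lim F x l -> right_deriv F x l.
Proof.
  intros H. unfold right_deriv. apply at_right_eps. intros eps He.
  destruct (H eps He) as [d Hd]. exists d. split. apply cond_pos.
  intros y Hy. assert (Hh := Hd (y - x) ltac:(lra) ltac:(rewrite Rabs_right; lra)).
  replace (x + (y - x)) with y in Hh by ring. exact Hh.
Qed.

Lemma quot_bound (f : R -> R) (x y p : R) : y <> x -> Rabs ((f y - f x) / (y - x) - p) < 1 ->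
  Rabs (f y - f x) <= (Rabs p + 1) * Rabs (y - x).
Proof.
  intros Hne Hq.
  replace (f y - f x) with ((f y - f x) / (y - x) * (y - x)) by (field; lra).
  rewrite Rabs_mult. apply Rmult_le_compat_r. apply Rabs_pos.
  replace ((f y - f x) / (y - x)) with (((f y - f x) / (y - x) - p) + p) by ring.
  eapply Rle_trans. apply Rabs_triang. lra.
Qed.

Lemma left_deriv_cont (f : R -> R) (x p : R) : left_deriv f x p -> filterlim f (at_left x) (locally (f x)).
Proof.
  unfold left_deriv. rewrite !at_left_eps. intros H eps He.
  destruct (H 1 ltac:(lra)) as [d [Hd K]].
  assert (Hp : 0 < Rabs p + 1) by (pose proof (Rabs_pos p); lra).
  exists (Rmin d (eps / (Rabs p + 1))). split.
  { apply Rmin_pos; auto. apply Rdiv_lt_0_compat; lra. }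
  intros y Hy. pose proof (Rmin_l d (eps / (Rabs p + 1))). pose proof (Rmin_r d (eps / (Rabs p + 1))).
  assert (B := quot_bound f x y p ltac:(lra) (K y ltac:(lra))).
  assert (Rabs (y - x) < eps / (Rabs p + 1)) by (rewrite Rabs_left; lra).
  eapply Rle_lt_trans. exact B.
  apply Rmult_lt_compat_l with (r := Rabs p + 1) in H2; auto.
  replace ((Rabs p + 1) * (eps / (Rabs p + 1))) with eps in H2 by (field; lra). exact H2.
Qed.

Lemma right_deriv_cont (f : R -> R) (x p : R) : right_deriv f x p -> filterlim f (at_right x) (locally (f x)).
Proof.
  unfold right_deriv. rewrite !at_right_eps. intros H eps He.
  destruct (H 1 ltac:(lra)) as [d [Hd K]].
  assert (Hp : 0 < Rabs p + 1) by (pose proof (Rabs_pos p); lra).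
  exists (Rmin d (eps / (Rabs p + 1))). split.
  { apply Rmin_pos; auto. apply Rdiv_lt_0_compat; lra. }
  intros y Hy. pose proof (Rmin_l d (eps / (Rabs p + 1))). pose proof (Rmin_r d (eps / (Rabs p + 1))).
  assert (B := quot_bound f x y p ltac:(lra) (K y ltac:(lra))).
  assert (Rabs (y - x) < eps / (Rabs p + 1)) by (rewrite Rabs_right; lra).
  eapply Rle_lt_trans. exact B.
  apply Rmult_lt_compat_l with (r := Rabs p + 1) in H2; auto.
  replace ((Rabs p + 1) * (eps / (Rabs p + 1))) with eps in H2 by (field; lra). exact H2.
Qed.


Lemma const_on (I : R -> Prop)
  (conv : forall x y z, I x -> I z -> x <= y <= z -> I y) (h : R -> R) :
  (forall x, I x -> is_derive h x 0) -> forall x y, I x -> I y -> h x = h y.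
Proof.
  intros H.
  assert (W : forall x y, I x -> I y -> x < y -> h x = h y).
  { intros x y Hx Hy Hxy.
    destruct (MVT_cor2 h (fun _ => 0) x y Hxy) as [c [Hc _]].
    { intros c Hc. apply is_derive_Reals. apply H. eapply conv; [exact Hx|exact Hy|exact Hc]. }
    lra. }
  intros x y Hx Hy. destruct (Rtotal_order x y) as [L|[E|G]].
  - auto.
  - subst; auto.
  - symmetry; auto.
Qed.

Lemma ode (I : R -> Prop)
  (conv : forall x y z, I x -> I z -> x <= y <= z -> I y) (kap d j r x0 : R) (f : R -> R) :
  0 < kap -> 0 < d -> 0 < j -> I x0 ->
  (forall x, I x -> ex_derive f x /\ ex_derive (Derive f) x /\
     kap * j * Derive f x - d * Derive (Derive f) x = r) ->
  exists A K, forall x, I x -> f x = A + r / (kap * j) * x + K * exp (kap * j / d * x).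
Proof.
  intros Hk Hd Hj Hx0 H.
  set (c := r / (kap * j)). set (a := kap * j / d).
  assert (Ha : 0 < a) by (unfold a; apply Rdiv_lt_0_compat; nra).
  set (h := fun x => (Derive f x - c) * exp (- (a * x))).
  assert (Hh : forall x, I x -> is_derive h x 0).
  { intros x Ix. destruct (H x Ix) as [E1 [E2 E3]].
    pose proof (Derive_correct _ _ E2) as D2.
    assert (Hexp : is_derive (fun y => exp (-(a*y))) x (-a * exp(-(a*x)))) by (auto_derive; [exact Logic.I|ring]).
    assert (Hm := is_derive_mult (fun y => Derive f y - c) _ x _ _ (is_derive_minus _ _ x _ _ D2 (is_derive_const c x)) Hexp ltac:(intros; apply Rmult_comm)).
    assert (Derive (Derive f) x = a * (Derive f x - c)).
    { assert (E4 : Derive (Derive f) x = (kap*j*Derive f x - r)/d).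
      { apply Rmult_eq_reg_l with d; [|lra]. field_simplify; lra. }
      rewrite E4. unfold a, c. field. split; lra. }
    unfold h. eapply is_derive_ext. intros; reflexivity.
    replace 0 with (plus (mult (minus (Derive (Derive f) x) 0) (exp (- (a * x))))
                      (mult (Derive f x - c) (- a * exp (- (a * x))))).
    exact Hm.
    unfold plus, mult, minus, opp, zero; simpl. rewrite H0. rewrite Ropp_0. change (plus (a * (Derive f x - c)) 0) with (a * (Derive f x - c) + 0). ring. }
  set (K0 := h x0).
  assert (HD : forall x, I x -> Derive f x = c + K0 * exp (a * x)).
  { intros x Ix. assert (h x = K0) by (apply (const_on I conv h Hh x x0); auto).
    unfold h in H0. 
    replace (Derive f x) with ((Derive f x - c) * exp (- (a * x)) * exp (a * x) + c).
    rewrite H0; ring.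
    rewrite Rmult_assoc, <- exp_plus. replace (- (a * x) + a * x) with 0 by ring. rewrite exp_0. ring. }
  set (g := fun x => f x - c * x - K0 / a * exp (a * x)).
  assert (Hg : forall x, I x -> is_derive g x 0).
  { intros x Ix. destruct (H x Ix) as [E1 [E2 E3]].
    unfold g. auto_derive. auto. rewrite HD by auto. field. lra. }
  exists (g x0), (K0 / a). intros x Ix.
  rewrite <- (const_on I conv g Hg x x0 Ix Hx0). unfold g. fold c a. ring.
Qed.


Lemma exp_sq_bound t : 0 <= t -> t * t / 4 <= exp t.
Proof.
  intros Ht. replace (exp t) with (exp (t/2) * exp (t/2)) by (rewrite <- exp_plus; f_equal; field).
  pose proof (exp_ineq1_le (t/2)). nra.
Qed.

Lemma no_exp_growth (A c K a xs C X : R) : 0 < a ->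
  (forall x, X <= x -> xs < x -> Rabs (A + c*x + K*exp(a*x)) <= C*(1+Rabs x)) -> K = 0.
Proof.
  intros Ha H. destruct (Req_dec K 0) as [E|NE]; auto. exfalso.
  set (P := Rabs C + Rabs A + Rabs c).
  assert (HK : 0 < Rabs K) by (apply Rabs_pos_lt; auto).
  assert (HP : 0 <= P) by (unfold P; pose proof (Rabs_pos C); pose proof (Rabs_pos A); pose proof (Rabs_pos c); lra).
  set (x := Rabs X + Rabs xs + 1 + 8 * P / (Rabs K * (a * a))).
  assert (0 <= 8 * P / (Rabs K * (a * a))) by (apply Rmult_le_pos; [lra| left; apply Rinv_0_lt_compat; apply Rmult_lt_0_compat; nra]).
  pose proof (Rle_abs X). pose proof (Rle_abs xs). pose proof (Rabs_pos X). pose proof (Rabs_pos xs).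
  assert (Hx1 : 1 <= x) by (unfold x; lra).
  assert (Hb := H x ltac:(unfold x; lra) ltac:(unfold x; lra)).
  rewrite (Rabs_right x) in Hb by lra.
  set (Y := A + c*x + K*exp(a*x)) in Hb.
  assert (HT : Rabs (K * exp (a * x)) <= Rabs Y + Rabs A + Rabs c * x).
  { replace (K * exp (a * x)) with (Y + (- A) + (- c) * x) by (unfold Y; ring).
    eapply Rle_trans. apply Rabs_triang. eapply Rle_trans. apply Rplus_le_compat_r. apply Rabs_triang.
    rewrite !Rabs_mult, !Rabs_Ropp, (Rabs_right x) by lra. lra. }
  rewrite Rabs_mult, (Rabs_right (exp _)) in HT by (left; apply exp_pos).
  pose proof (exp_sq_bound (a * x) ltac:(nra)).
  assert (C * (1 + x) <= Rabs C * (1 + x)) by (apply Rmult_le_compat_r; [lra| apply Rle_abs]).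
  assert (Rabs K * (a * x * (a * x) / 4) <= 2 * P * x).
  { apply Rle_trans with (Rabs K * exp (a * x)). apply Rmult_le_compat_l; lra.
    unfold P. pose proof (Rabs_pos C). pose proof (Rabs_pos A). pose proof (Rabs_pos c).
    assert (Rabs C * (1+x) <= 2*Rabs C*x) by nra. assert (Rabs A <= 2 * Rabs A * x) by nra. assert (Rabs c * x <= 2 * Rabs c * x) by nra. lra. }
  assert (Hx2 : x > 8 * P / (Rabs K * (a * a))) by (unfold x; lra).
  assert (x * (Rabs K * (a * a)) > 8 * P).
  { assert (Hpos: Rabs K * (a*a) > 0) by (apply Rmult_gt_0_compat; nra).
    apply (Rmult_gt_compat_r _ _ _ Hpos) in Hx2.
    replace (8 * P / (Rabs K * (a * a)) * (Rabs K * (a * a))) with (8 * P) in Hx2 by (field; nra). lra. }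
  nra.
Qed.


Definition c_ (k j r : R) := r/(k*j).
Definition a_ (k d j : R) := k*j/d.
Definition p1_ k2 d1 d2 l j r := (l*j + d2*c_ k2 j r)/d1.
Definition B_ k1 k2 d1 d2 l j r := (p1_ k2 d1 d2 l j r - c_ k1 j r)/a_ k1 d1 j.
Definition G_ k1 k2 d1 d2 l j r s :=
  c_ k1 j r * s + B_ k1 k2 d1 d2 l j r * (1 - exp (-(a_ k1 d1 j * s))).

Lemma lin_deriv A c x : derivable_pt_lim (fun t => A + c * t) x c.
Proof. apply is_derive_Reals. auto_derive; auto; ring. Qed.

Lemma expF_deriv A c K a x : derivable_pt_lim (fun t => A + c * t + K * exp (a * t)) x (c + K * a * exp (a * x)).
Proof. apply is_derive_Reals. auto_derive; auto; ring. Qed.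

Lemma analyze k1 k2 d1 d2 l j r ts tin xs th1 th2 :
  0 < k1 -> 0 < k2 -> 0 < d1 -> 0 < d2 -> 0 < j ->
  stefan_solution k1 k2 d1 d2 l j r ts tin xs th1 th2 ->
  0 < xs /\ 0 <= p1_ k2 d1 d2 l j r /\ G_ k1 k2 d1 d2 l j r xs = ts - tin /\
  (forall t, 0 <= t <= xs -> th1 t = ts + c_ k1 j r * (t - xs) + B_ k1 k2 d1 d2 l j r * (exp (a_ k1 d1 j * (t - xs)) - 1)) /\
  (forall t, xs <= t -> th2 t = ts + c_ k2 j r * (t - xs)).
Proof.
  intros Hk1 Hk2 Hd1 Hd2 Hj
    [Hxs [Ode1 [Ode2 [E1 [E2 [[p1 [p2 [Lp1 [Rp2 St]]]] [E0 [C0 [Cons [Cg [Xg Gr]]]]]]]]]]].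
  destruct (ode (fun x => xs < x) ltac:(intros; lra) k2 d2 j r (xs + 1) th2 Hk2 Hd2 Hj ltac:(lra) Ode2)
    as [A2 [K2 F2]].
  assert (HK2 : K2 = 0).
  { apply (no_exp_growth A2 (r / (k2 * j)) K2 (k2 * j / d2) xs Cg Xg).
    apply Rdiv_lt_0_compat; nra.
    intros x Hx Hx'. rewrite <- F2 by auto. auto. }
  subst K2.
  assert (F2' : forall x, xs < x -> th2 x = A2 + r / (k2 * j) * x).
  { intros x Hx. rewrite F2 by auto. ring. }
  assert (T2 : th2 xs = A2 + r / (k2 * j) * xs).
  { apply (lim_unique_right th2 (fun t => A2 + r / (k2 * j) * t) xs).
    eapply right_deriv_cont; eauto.
    apply (cont_right (fun t => A2 + r / (k2 * j) * t) xs). apply derivable_continuous_pt. eexists. apply lin_deriv.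
    exists 1. split. lra. intros y Hy. apply F2'. lra. }
  assert (P2 : p2 = r / (k2 * j)).
  { apply (lim_unique_right (fun y => (th2 y - th2 xs) / (y - xs))
      (fun y => ((A2 + r / (k2 * j) * y) - (A2 + r / (k2 * j) * xs)) / (y - xs)) xs).
    exact Rp2. apply (deriv_right (fun t => A2 + r / (k2 * j) * t)). apply lin_deriv.
    exists 1. split. lra. intros y Hy. rewrite F2', T2 by lra. reflexivity. }
  assert (Hp1 : 0 <= p1).
  { destruct (Rle_lt_dec 0 p1) as [h|h]; auto. exfalso.
    unfold left_deriv in Lp1. rewrite at_left_eps in Lp1.
    destruct (Lp1 (- p1) ltac:(lra)) as [d [Hd Hq]].
    set (y := xs - Rmin d xs / 2).
    pose proof (Rmin_l d xs). pose proof (Rmin_r d xs). pose proof (Rmin_pos d xs Hd Hxs).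
    assert (Q := Hq y ltac:(unfold y; lra)).
    assert (th1 y <= ts) by (apply Cons; unfold y; lra).
    assert (0 <= (th1 y - th1 xs) / (y - xs)).
    { replace ((th1 y - th1 xs) / (y - xs)) with ((th1 xs - th1 y) * / (xs - y)) by (field; unfold y; lra).
      apply Rmult_le_pos. lra. left. apply Rinv_0_lt_compat. unfold y; lra. }
    apply Rabs_def2 in Q. lra. }
  assert (Ep1 : p1 = p1_ k2 d1 d2 l j r).
  { unfold p1_, c_. rewrite <- P2. apply Rmult_eq_reg_l with d1; [|lra]. field_simplify; lra. }
  destruct (ode (fun x => 0 < x < xs) ltac:(intros; lra) k1 d1 j r (xs / 2) th1 Hk1 Hd1 Hj ltac:(lra) Ode1)
    as [A [K F1]].
  set (F := fun t => A + r / (k1 * j) * t + K * exp (k1 * j / d1 * t)).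
  assert (T1 : th1 xs = F xs).
  { apply (lim_unique_left th1 F xs).
    eapply left_deriv_cont; eauto.
    apply (cont_left F xs). apply derivable_continuous_pt. eexists. apply expF_deriv.
    exists xs. split. lra. intros y Hy. apply F1. lra. }
  assert (T0 : th1 0 = F 0).
  { apply (lim_unique_right th1 F 0).
    exact C0.
    apply (cont_right F 0). apply derivable_continuous_pt. eexists. apply expF_deriv.
    exists xs. split. lra. intros y Hy. apply F1. lra. }
  assert (P1 : p1 = r / (k1 * j) + K * (k1 * j / d1) * exp (k1 * j / d1 * xs)).
  { apply (lim_unique_left (fun y => (th1 y - th1 xs) / (y - xs))
      (fun y => (F y - F xs) / (y - xs)) xs).
    exact Lp1. apply (deriv_left F xs). apply expF_deriv.
    exists xs. split. lra. intros y Hy. rewrite F1, T1 by lra. reflexivity. }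
  assert (HB : K * exp (k1 * j / d1 * xs) = B_ k1 k2 d1 d2 l j r).
  { unfold B_, a_, c_. rewrite <- Ep1, P1. field. split; lra. }
  assert (Fform : forall t, F t = ts + c_ k1 j r * (t - xs) + B_ k1 k2 d1 d2 l j r * (exp (a_ k1 d1 j * (t - xs)) - 1)).
  { intros t. rewrite <- HB. unfold c_, a_.
    assert (F xs = ts) by (rewrite <- T1; auto).
    unfold F in H |- *.
    replace (exp (k1 * j / d1 * t)) with (exp (k1 * j / d1 * xs) * exp (k1 * j / d1 * (t - xs)))
      by (rewrite <- exp_plus; f_equal; ring).
    rewrite <- H. ring. }
  split; [auto|]. split; [lra|]. split.
  { rewrite <- E0, T0, Fform. unfold G_. 
    replace (a_ k1 d1 j * (0 - xs)) with (-(a_ k1 d1 j * xs)) by ring. ring. }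
  split.
  { intros t Ht. rewrite <- Fform.
    destruct (Req_dec t 0) as [Z|Z]. subst; auto.
    destruct (Req_dec t xs) as [Z'|Z']. subst; auto.
    apply F1. lra. }
  { intros t Ht. destruct (Req_dec t xs) as [Z|Z]. subst. rewrite E2. unfold c_; ring.
    rewrite F2' by lra. unfold c_. rewrite T2 in E2. rewrite <- E2. ring. }
Qed.


Definition Gd k1 k2 d1 d2 l j r t :=
  c_ k1 j r * (1 - exp (-(a_ k1 d1 j * t))) + p1_ k2 d1 d2 l j r * exp (-(a_ k1 d1 j * t)).

Lemma G_deriv k1 k2 d1 d2 l j r t : 0 < k1 -> 0 < d1 -> 0 < j ->
  derivable_pt_lim (G_ k1 k2 d1 d2 l j r) t (Gd k1 k2 d1 d2 l j r t).
Proof.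
  intros. apply is_derive_Reals. unfold G_, Gd, B_.
  assert (0 < a_ k1 d1 j) by (unfold a_; apply Rdiv_lt_0_compat; nra).
  auto_derive; auto. field. lra.
Qed.

Lemma exp_neg_lt1 x : 0 < x -> exp (- x) < 1.
Proof.
  intros. pose proof (exp_ineq1 x ltac:(lra)).
  assert (exp (-x) * exp x = 1) by (rewrite <- exp_plus; replace (-x + x) with 0 by ring; apply exp_0).
  pose proof (exp_pos (-x)). nra.
Qed.

Lemma Gd_pos k1 k2 d1 d2 l j r t : 0 < k1 -> 0 < d1 -> 0 < j -> 0 < r -> 0 < t ->
  0 <= p1_ k2 d1 d2 l j r -> 0 < Gd k1 k2 d1 d2 l j r t.
Proof.
  intros. unfold Gd.
  assert (0 < a_ k1 d1 j) by (unfold a_; apply Rdiv_lt_0_compat; nra).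
  assert (0 < c_ k1 j r) by (unfold c_; apply Rdiv_lt_0_compat; nra).
  pose proof (exp_neg_lt1 (a_ k1 d1 j * t) ltac:(nra)). pose proof (exp_pos (-(a_ k1 d1 j * t))).
  nra.
Qed.

Lemma G_0 k1 k2 d1 d2 l j r : G_ k1 k2 d1 d2 l j r 0 = 0.
Proof. unfold G_. rewrite !Rmult_0_r, Ropp_0, exp_0. ring. Qed.

Lemma G_strict k1 k2 d1 d2 l j r u v : 0 < k1 -> 0 < d1 -> 0 < j -> 0 < r ->
  0 <= p1_ k2 d1 d2 l j r -> 0 <= u -> u < v ->
  G_ k1 k2 d1 d2 l j r u < G_ k1 k2 d1 d2 l j r v.
Proof.
  intros. destruct (MVT_cor2 (G_ k1 k2 d1 d2 l j r) (Gd k1 k2 d1 d2 l j r) u v) as [x [Hx Hx']]; auto.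
  intros; apply G_deriv; auto.
  pose proof (Gd_pos k1 k2 d1 d2 l j r x ltac:(auto) ltac:(auto) ltac:(auto) ltac:(auto) ltac:(lra) ltac:(auto)).
  nra.
Qed.

Lemma G_mono k1 k2 d1 d2 l j r u v : 0 < k1 -> 0 < d1 -> 0 < j -> 0 < r ->
  0 <= p1_ k2 d1 d2 l j r -> 0 <= u -> 0 <= v ->
  G_ k1 k2 d1 d2 l j r u <= G_ k1 k2 d1 d2 l j r v -> u <= v.
Proof.
  intros. destruct (Rle_lt_dec u v); auto.
  pose proof (G_strict k1 k2 d1 d2 l j r v u); lra.
Qed.

Lemma G_upper k1 k2 d1 d2 l j r u : 0 < k1 -> 0 < d1 -> 0 < j -> 0 < r ->
  0 <= p1_ k2 d1 d2 l j r -> 0 <= u ->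
  G_ k1 k2 d1 d2 l j r u <= (c_ k1 j r + p1_ k2 d1 d2 l j r) * u.
Proof.
  intros. unfold G_, B_.
  assert (0 < a_ k1 d1 j) by (unfold a_; apply Rdiv_lt_0_compat; nra).
  assert (0 < c_ k1 j r) by (unfold c_; apply Rdiv_lt_0_compat; nra).
  pose proof (exp_ineq1_le (-(a_ k1 d1 j * u))).
  assert (exp (-(a_ k1 d1 j * u)) <= 1).
  { destruct (Req_dec u 0). subst. rewrite Rmult_0_r, Ropp_0, exp_0; lra.
    left; apply exp_neg_lt1; nra. }
  set (e := exp (-(a_ k1 d1 j * u))) in *.
  set (a := a_ k1 d1 j) in *. set (c := c_ k1 j r) in *. set (p := p1_ k2 d1 d2 l j r) in *.
  replace ((p - c) / a * (1 - e)) with ((p - c) * ((1 - e) / a)) by (field; lra).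
  assert (0 <= (1 - e) / a) by (apply Rdiv_le_0_compat; lra).
  assert ((1 - e) / a <= u) by (apply Rmult_le_reg_l with a; [lra|]; field_simplify; lra).
  nra.
Qed.

Lemma G_cont k1 k2 d1 d2 l j r : 0 < k1 -> 0 < d1 -> 0 < j -> continuity (G_ k1 k2 d1 d2 l j r).
Proof.
  intros. apply derivable_continuous. intros t. exists (Gd k1 k2 d1 d2 l j r t). apply G_deriv; auto.
Qed.

Lemma G_solve k1 k2 d1 d2 l j r D : 0 < k1 -> 0 < d1 -> 0 < j -> 0 < r -> 0 < D ->
  exists s, 0 < s /\ G_ k1 k2 d1 d2 l j r s = D.
Proof.
  intros.
  assert (0 < a_ k1 d1 j) by (unfold a_; apply Rdiv_lt_0_compat; nra).
  assert (0 < c_ k1 j r) by (unfold c_; apply Rdiv_lt_0_compat; nra).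
  set (B := B_ k1 k2 d1 d2 l j r).
  set (S := (D + Rabs B) / c_ k1 j r + 1).
  assert (0 <= (D + Rabs B) / c_ k1 j r) by (apply Rdiv_le_0_compat; [pose proof (Rabs_pos B)|]; lra).
  assert (GS : D < G_ k1 k2 d1 d2 l j r S).
  { unfold G_. fold B.
    assert (0 < exp (-(a_ k1 d1 j * S))) by apply exp_pos.
    assert (exp (-(a_ k1 d1 j * S)) < 1) by (apply exp_neg_lt1; unfold S; nra).
    assert (- Rabs B <= B * (1 - exp (- (a_ k1 d1 j * S)))).
    { destruct (Rle_lt_dec 0 B). rewrite Rabs_right by lra. nra. rewrite Rabs_left by lra. nra. }
    assert (c_ k1 j r * S = D + Rabs B + c_ k1 j r) by (unfold S; field; lra).
    lra. }
  destruct (IVT (fun s => G_ k1 k2 d1 d2 l j r s - D) 0 S) as [z [Hz Hz']].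
  { apply continuity_minus. apply G_cont; auto. apply continuity_const. intros ??; auto. }
  unfold S; lra. rewrite G_0; lra. lra.
  exists z. split; [|lra].
  destruct (Req_dec z 0); [|lra]. subst. rewrite G_0 in Hz'. lra.
Qed.


Lemma phi_dec v w : 0 < v < w -> v * (1 - exp (- w)) < w * (1 - exp (- v)).
Proof.
  intros H.
  pose proof (exp_ineq1 (-(w - v)) ltac:(lra)) as E1.
  assert (Ew : exp (- w) = exp (- v) * exp (-(w - v))) by (rewrite <- exp_plus; f_equal; ring).
  pose proof (exp_ineq1 v ltac:(lra)) as E2.
  assert (Ev : exp (- v) * exp v = 1) by (rewrite <- exp_plus; replace (-v + v) with 0 by ring; apply exp_0).
  pose proof (exp_pos (- v)). pose proof (exp_pos v).
  assert (exp (- v) * (1 + v) < 1) by nra.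
  rewrite Ew. set (ev := exp (- v)) in *. set (E := exp (- (w - v))) in *.
  assert (v * ev * E > v * ev * (1 - (w - v))).
  { apply Rmult_gt_compat_l. nra. lra. }
  nra.
Qed.

Lemma p1_mono k2 d1 d2 l j j' r : 0 < k2 -> 0 < d1 -> 0 < d2 -> l < 0 -> 0 < r -> 0 < j -> j < j' ->
  p1_ k2 d1 d2 l j' r <= p1_ k2 d1 d2 l j r.
Proof.
  intros. unfold p1_, c_.
  assert (r / (k2 * j') < r / (k2 * j)).
  { unfold Rdiv. apply Rmult_lt_compat_l. lra. apply Rinv_lt_contravar. apply Rmult_lt_0_compat; apply Rmult_lt_0_compat; lra. nra. }
  assert (l*j' < l*j) by nra. assert (d2 * (r/(k2*j')) < d2*(r/(k2*j))) by (apply Rmult_lt_compat_l; lra).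
  assert (N: l*j' + d2*(r/(k2*j')) <= l*j + d2*(r/(k2*j))) by lra.
  apply Rmult_le_compat_r with (r := / d1) in N; [exact N | left; apply Rinv_0_lt_compat; lra].
Qed.

Lemma G_j_mono k1 k2 d1 d2 l j j' r u : 0 < k1 -> 0 < k2 -> 0 < d1 -> 0 < d2 -> l < 0 -> 0 < r ->
  0 < j -> j < j' -> 0 <= p1_ k2 d1 d2 l j' r -> 0 < u ->
  G_ k1 k2 d1 d2 l j' r u < G_ k1 k2 d1 d2 l j r u.
Proof.
  intros.
  destruct (MVT_cor2 (fun t => G_ k1 k2 d1 d2 l j r t - G_ k1 k2 d1 d2 l j' r t)
     (fun t => Gd k1 k2 d1 d2 l j r t - Gd k1 k2 d1 d2 l j' r t) 0 u) as [x [Hx Hx']]; auto.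
  { intros. apply derivable_pt_lim_minus; apply G_deriv; lra. }
  rewrite !G_0 in Hx.
  assert (0 < Gd k1 k2 d1 d2 l j r x - Gd k1 k2 d1 d2 l j' r x); [|nra].
  unfold Gd.
  pose proof (p1_mono k2 d1 d2 l j j' r ltac:(auto) ltac:(auto) ltac:(auto) ltac:(auto) ltac:(auto) ltac:(auto) ltac:(auto)).
  set (p := p1_ k2 d1 d2 l j r) in *. set (p' := p1_ k2 d1 d2 l j' r) in *.
  unfold a_, c_.
  set (v := k1 * j / d1 * x). set (w := k1 * j' / d1 * x).
  assert (Hvw : 0 < v < w).
  { unfold v, w. split. apply Rmult_lt_0_compat; [apply Rdiv_lt_0_compat; nra|lra].
    apply Rmult_lt_compat_r. lra. unfold Rdiv. apply Rmult_lt_compat_r. apply Rinv_0_lt_compat; lra. nra. }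
  assert (EE : exp (- w) < exp (- v)) by (apply exp_increasing; lra).
  pose proof (exp_pos (- w)).
  assert (p * exp (- v) >= p' * exp (- w)) by nra.
  assert (r / (k1 * j) * (1 - exp (- v)) - r / (k1 * j') * (1 - exp (- w)) =
          (r * x / d1) * (w * (1 - exp (- v)) - v * (1 - exp (- w))) / (v * w)).
  { unfold v, w. field. repeat split; nra. }
  pose proof (phi_dec v w Hvw).
  assert (0 < (r * x / d1) * (w * (1 - exp (- v)) - v * (1 - exp (- w))) / (v * w)).
  { apply Rdiv_lt_0_compat; [apply Rmult_lt_0_compat; [apply Rdiv_lt_0_compat; nra|lra]|nra]. }
  lra.
Qed.


Lemma cond_iff k2 d1 d2 l j r : 0 < k2 -> 0 < d1 -> 0 < d2 -> 0 < j ->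
  (- l <= d2 * r / (k2 * j ^ 2) <-> 0 <= p1_ k2 d1 d2 l j r).
Proof.
  intros. unfold p1_, c_.
  assert (Eq : d2 * (r / (k2 * j)) = j * (d2 * r / (k2 * j ^ 2))) by (field; lra).
  rewrite Eq. split; intros H3.
  - apply Rmult_le_pos; [|left; apply Rinv_0_lt_compat; lra]. nra.
  - assert (0 <= l * j + j * (d2 * r / (k2 * j ^ 2))).
    { apply Rmult_le_compat_r with (r := d1) in H3; [|lra].
      replace ((l * j + j * (d2 * r / (k2 * j ^ 2))) / d1 * d1) with (l * j + j * (d2 * r / (k2 * j ^ 2))) in H3 by (field; lra).
      lra. }
    nra.
Qed.

Lemma construct k1 k2 d1 d2 l j r ts tin s : 0 < k1 -> 0 < k2 -> 0 < d1 -> 0 < d2 -> 0 < j -> 0 < r ->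
  0 <= p1_ k2 d1 d2 l j r -> 0 < s -> G_ k1 k2 d1 d2 l j r s = ts - tin ->
  stefan_solution k1 k2 d1 d2 l j r ts tin s
    (fun t => ts + c_ k1 j r * (t - s) + B_ k1 k2 d1 d2 l j r * (exp (a_ k1 d1 j * (t - s)) - 1))
    (fun t => ts + c_ k2 j r * (t - s)).
Proof.
  intros Hk1 Hk2 Hd1 Hd2 Hj Hr Hp Hs HG.
  assert (Ha : 0 < a_ k1 d1 j) by (unfold a_; apply Rdiv_lt_0_compat; nra).
  set (c1 := c_ k1 j r) in *. set (a1 := a_ k1 d1 j) in *. set (B := B_ k1 k2 d1 d2 l j r) in *.
  set (c2 := c_ k2 j r).
  set (th1 := fun t => ts + c1 * (t - s) + B * (exp (a1 * (t - s)) - 1)).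
  set (D1 := fun t => c1 + B * a1 * exp (a1 * (t - s))).
  assert (dth1 : forall y, is_derive th1 y (D1 y)).
  { intros y. unfold th1, D1. auto_derive; auto. unfold Rminus; ring. }
  assert (dD1 : forall y, is_derive D1 y (B * a1 * a1 * exp (a1 * (y - s)))).
  { intros y. unfold D1. auto_derive; auto. unfold Rminus; ring. }
  assert (DD1 : forall y, Derive th1 y = D1 y) by (intros; apply is_derive_unique; auto).
  set (th2 := fun t => ts + c2 * (t - s)).
  assert (dth2 : forall y, is_derive th2 y c2).
  { intros y. unfold th2. auto_derive; auto. ring. }
  assert (dD2 : forall y, is_derive (fun _ : R => c2) y 0).
  { intros y. auto_derive; auto. }
  assert (DD2 : forall y, Derive th2 y = c2) by (intros; apply is_derive_unique; auto).
  assert (Hp1 : c1 + B * a1 = p1_ k2 d1 d2 l j r).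
  { unfold B, B_. fold c1 a1. field. lra. }
  unfold stefan_solution. fold th1 th2.
  split; [exact Hs|]. split.
  { intros x Hx. split. eexists; apply dth1. split.
    apply (ex_derive_ext D1). intros; symmetry; apply DD1. eexists; apply dD1.
    rewrite DD1. rewrite (Derive_ext _ D1) by apply DD1. rewrite (is_derive_unique _ _ _ (dD1 x)).
    unfold D1, c1, a1, c_, a_. field. lra. }
  split.
  { intros x Hx. split. eexists; apply dth2. split.
    apply (ex_derive_ext (fun _ => c2)). intros; symmetry; apply DD2. eexists; apply dD2.
    rewrite DD2. rewrite (Derive_ext _ (fun _ => c2)) by apply DD2. rewrite (is_derive_unique _ _ _ (dD2 x)).
    unfold c2, c_. field. lra. }
  split. { unfold th1. rewrite Rminus_diag, !Rmult_0_r, exp_0. ring. }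
  split. { unfold th2. ring. }
  split.
  { exists (p1_ k2 d1 d2 l j r), c2. split.
    apply deriv_left. apply is_derive_Reals. rewrite <- Hp1.
    replace (c1 + B * a1) with (D1 s) by (unfold D1; rewrite Rminus_diag, !Rmult_0_r, exp_0; ring). apply dth1.
    split. apply deriv_right. apply is_derive_Reals. apply dth2.
    unfold p1_. fold c2. field. lra. }
  split.
  { unfold th1. unfold G_ in HG. fold c1 a1 B in HG.
    replace (a1 * (0 - s)) with (-(a1 * s)) by ring. lra. }
  split.
  { apply (cont_right th1 0). apply derivable_continuous_pt. exists (D1 0). apply is_derive_Reals. apply dth1. }
  split.
  { intros x Hx. unfold th1.
    assert (G_ k1 k2 d1 d2 l j r 0 <= G_ k1 k2 d1 d2 l j r (s - x)).
    { destruct (Req_dec x s). subst. rewrite Rminus_diag. lra.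
      left. apply G_strict; auto; lra. }
    rewrite G_0 in H. unfold G_ in H. fold c1 a1 B in H.
    replace (- (a1 * (s - x))) with (a1 * (x - s)) in H by ring. lra. }
  { exists (Rabs (ts - c2 * s) + Rabs c2), 0. intros x Hx. unfold th2.
    replace (ts + c2 * (x - s)) with ((ts - c2 * s) + c2 * x) by ring.
    eapply Rle_trans. apply Rabs_triang. rewrite Rabs_mult.
    pose proof (Rabs_pos (ts - c2 * s)). pose proof (Rabs_pos c2). pose proof (Rabs_pos x). nra. }
Qed.


Theorem theorem4p1 (kappa1 kappa2 d1 d2 l r theta_star : R) :
  0 < kappa1 -> 0 < kappa2 -> 0 < d1 -> 0 < d2 -> l < 0 -> 0 < r ->
  (* existence and uniqueness criterion *)
  (forall jG theta_in, 0 < jG -> theta_in < theta_star ->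
     (- l <= d2 * r / (kappa2 * jG ^ 2) <->
      stefan_unique kappa1 kappa2 d1 d2 l jG r theta_star theta_in)) /\
  (* x_* strictly decreasing in theta_in *)
  (forall jG theta_in theta_in' xs th1 th2 xs' th1' th2',
     0 < jG -> theta_in < theta_in' -> theta_in' < theta_star ->
     - l <= d2 * r / (kappa2 * jG ^ 2) ->
     stefan_solution kappa1 kappa2 d1 d2 l jG r theta_star theta_in xs th1 th2 ->
     stefan_solution kappa1 kappa2 d1 d2 l jG r theta_star theta_in' xs' th1' th2' ->
     xs' < xs) /\
  (* x_* strictly increasing in jG *)
  (forall jG jG' theta_in xs th1 th2 xs' th1' th2',
     0 < jG -> jG < jG' -> theta_in < theta_star ->
     - l <= d2 * r / (kappa2 * jG ^ 2) ->
     - l <= d2 * r / (kappa2 * jG' ^ 2) ->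
     stefan_solution kappa1 kappa2 d1 d2 l jG r theta_star theta_in xs th1 th2 ->
     stefan_solution kappa1 kappa2 d1 d2 l jG' r theta_star theta_in xs' th1' th2' ->
     xs < xs') /\
  (* x_* -> +oo as jG -> +oo (theta_in fixed) *)
  (forall theta_in, theta_in < theta_star ->
     forall M, exists J, 0 < J /\
       forall jG xs th1 th2, J <= jG ->
       - l <= d2 * r / (kappa2 * jG ^ 2) ->
       stefan_solution kappa1 kappa2 d1 d2 l jG r theta_star theta_in xs th1 th2 ->
       M <= xs) /\
  (* x_* -> +oo as theta_in -> -oo (jG fixed) *)
  (forall jG, 0 < jG -> - l <= d2 * r / (kappa2 * jG ^ 2) ->
     forall M, exists T, T < theta_star /\
       forall theta_in xs th1 th2, theta_in <= T ->
       stefan_solution kappa1 kappa2 d1 d2 l jG r theta_star theta_in xs th1 th2 ->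
       M <= xs).
Proof.
  intros Hk1 Hk2 Hd1 Hd2 Hl Hr.
  split; [|split; [|split; [|split]]].
  - intros j tin Hj Htin. rewrite (cond_iff kappa2 d1 d2 l j r) by auto. split.
    + intros Hp.
      destruct (G_solve kappa1 kappa2 d1 d2 l j r (theta_star - tin)) as [s [Hs HG]]; auto; try lra.
      eexists s, _, _. split. apply construct; eauto.
      intros xs' th1' th2' Sol.
      destruct (analyze _ _ _ _ _ _ _ _ _ _ _ _ Hk1 Hk2 Hd1 Hd2 Hj Sol) as [Hxs [_ [HG' [F1 F2]]]].
      assert (xs' = s).
      { apply Rle_antisym; [apply (G_mono kappa1 kappa2 d1 d2 l j r xs' s)|apply (G_mono kappa1 kappa2 d1 d2 l j r s xs')]; auto; lra. }
      subst xs'. split; auto.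
    + intros [xs [th1 [th2 [Sol _]]]].
      destruct (analyze _ _ _ _ _ _ _ _ _ _ _ _ Hk1 Hk2 Hd1 Hd2 Hj Sol) as [_ [Hp _]]. exact Hp.
  - intros j tin tin' xs th1 th2 xs' th1' th2' Hj Ht Ht' Hc S1 S2.
    destruct (analyze _ _ _ _ _ _ _ _ _ _ _ _ Hk1 Hk2 Hd1 Hd2 Hj S1) as [Hxs [Hp [HG _]]].
    destruct (analyze _ _ _ _ _ _ _ _ _ _ _ _ Hk1 Hk2 Hd1 Hd2 Hj S2) as [Hxs' [_ [HG' _]]].
    destruct (Rlt_le_dec xs' xs) as [h|h]; auto. exfalso.
    assert (G_ kappa1 kappa2 d1 d2 l j r xs <= G_ kappa1 kappa2 d1 d2 l j r xs').
    { destruct (Req_dec xs xs'). subst; lra. left; apply G_strict; auto; lra. }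
    lra.
  - intros j j' tin xs th1 th2 xs' th1' th2' Hj Hjj Ht Hc Hc' S1 S2.
    assert (Hj' : 0 < j') by lra.
    destruct (analyze _ _ _ _ _ _ _ _ _ _ _ _ Hk1 Hk2 Hd1 Hd2 Hj S1) as [Hxs [Hp [HG _]]].
    destruct (analyze _ _ _ _ _ _ _ _ _ _ _ _ Hk1 Hk2 Hd1 Hd2 Hj' S2) as [Hxs' [Hp' [HG' _]]].
    pose proof (G_j_mono kappa1 kappa2 d1 d2 l j j' r xs Hk1 Hk2 Hd1 Hd2 Hl Hr Hj Hjj Hp' Hxs).
    destruct (Rlt_le_dec xs xs') as [h|h]; auto. exfalso.
    assert (G_ kappa1 kappa2 d1 d2 l j' r xs' <= G_ kappa1 kappa2 d1 d2 l j' r xs).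
    { destruct (Req_dec xs xs'). subst; lra. left; apply G_strict; auto; lra. }
    lra.
  - intros tin Htin M. set (Q := d2 * r / (kappa2 * (- l))).
    assert (HQ : 0 < Q) by (unfold Q; apply Rdiv_lt_0_compat; nra).
    exists (Q + 1). split. lra. intros j xs th1 th2 HJ Hc _. exfalso.
    assert (Hj : 0 < j) by lra.
    assert (j ^ 2 > Q) by nra.
    apply Rmult_le_compat_r with (r := kappa2 * j ^ 2) in Hc; [|nra].
    replace (d2 * r / (kappa2 * j ^ 2) * (kappa2 * j ^ 2)) with (d2 * r) in Hc by (field; nra).
    assert (Q * (kappa2 * (- l)) = d2 * r) by (unfold Q; field; nra).
    assert (kappa2*(-l)*(j^2 - Q) > 0) by (apply Rmult_gt_0_compat; nra). nra.
  - intros j Hj Hc M. apply (cond_iff kappa2 d1 d2 l j r) in Hc; auto.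
    set (c := c_ kappa1 j r). set (p := p1_ kappa2 d1 d2 l j r) in *.
    assert (0 < c) by (unfold c, c_; apply Rdiv_lt_0_compat; nra).
    exists (theta_star - (c + p) * Rmax M 0 - 1). split.
    { assert (0 <= Rmax M 0) by apply Rmax_r. nra. }
    intros tin xs th1 th2 Ht Sol.
    destruct (analyze _ _ _ _ _ _ _ _ _ _ _ _ Hk1 Hk2 Hd1 Hd2 Hj Sol) as [Hxs [_ [HG _]]].
    pose proof (G_upper kappa1 kappa2 d1 d2 l j r xs Hk1 Hd1 Hj Hr Hc ltac:(lra)).
    fold c p in H0.
    pose proof (Rmax_l M 0). pose proof (Rmax_r M 0).
    assert ((c + p) * (xs - Rmax M 0) >= 1) by nra.
    destruct (Rle_lt_dec xs (Rmax M 0)); [|lra]. nra.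
Qed.
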